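(* Let $x>1$ be an irrational real number with continued fraction expansion $x=[a_1,a_2,\ldots]$ (all $a_i\in\mathbb{Z}_{\geq1}$) and convergents $x_n=[a_1,\ldots,a_n]$. Let $m\geq2$ be even, so that $x_{m-1}<x_m$, and put $a=a_1+\cdots+a_m-1$. Then for every rational number $r/s$ with $x_{m-1}<r/s<x_m$, the coefficients of $q^j$ for $0\leq j\leq a-1$ in the Taylor series at $q=0$ of $[r/s]_q$ coincide with the corresponding coefficients of $[x_{m-1}]_q$ and of $[x_m]_q$.
   Context: For an integer $a\geq1$ put $[a]_q=1+q+\cdots+q^{a-1}$ and $[a]_{q^{-1}}=1+q^{-1}+\cdots+q^{-(a-1)}$. Every rational number $r/s>1$ has a unique expansion as a regular continued fraction of even length, $$r/s=[a_1,\ldots,a_{2m}]=a_1+\cfrac{1}{a_2+\cfrac{1}{\ddots+\cfrac{1}{a_{2m}}}},$$ with all $a_i\in\mathbb{Z}_{\geq1}$. Its $q$-deformation is the rational function $$\left[\tfrac{r}{s}\right]_q=[a_1]_q+\cfrac{q^{a_1}}{[a_2]_{q^{-1}}+\cfrac{q^{-a_2}}{[a_3]_q+\cfrac{q^{a_3}}{[a_4]_{q^{-1}}+\cfrac{q^{-a_4}}{\ddots+\cfrac{q^{a_{2m-1}}}{[a_{2m}]_{q^{-1}}}}}}}.$$ One also sets $[1]_q=1$. Each $[r/s]_q$ is a quotient of polynomials with nonnegative integer coefficients, each having constant term $1$, and is identified with its Taylor expansion at $q=0$. Convergents are deformed using their own even-length expansions. *)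

(* Defs.v *)
From HB Require Import structures.
From mathcomp Require Import all_boot all_order all_algebra fraction.
Set Implicit Arguments. Unset Strict Implicit. Unset Printing Implicit Defensive.
Import Order.TTheory GRing.Theory Num.Theory.
Local Open Scope ring_scope.

Notation RF := {fraction {poly rat}}.
Definition qv : RF := @FracField.tofrac _ ('X : {poly rat}).

Definition qint (a : nat) : RF := \sum_(i < a) qv ^+ i.
Definition qintinv (a : nat) : RF := \sum_(i < a) qv ^- i.

(* The boolean flag says whether the current term is a "q" (true) or a
   "q^-1" (false) term; alternates along the expansion. *)
Fixpoint qcf (b : bool) (l : seq nat) : RF :=
  match l with
  | [::] => 0
  | [:: x] => if b then qint x else qintinv x
  | x :: l' => if b then qint x + qv ^+ x / qcf (~~ b) l'
               else qintinv x + qv ^- x / qcf (~~ b) l'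
  end.

Fixpoint euclid_cf (fuel n d : nat) : seq nat :=
  match fuel with
  | 0 => [::]
  | f.+1 => if d == 0%N then [::] else (n %/ d)%N :: euclid_cf f d (n %% d)
  end.

Definition cf_of_rat (r : rat) : seq nat :=
  euclid_cf (`|denq r|%N).+1 `|numq r|%N `|denq r|%N.

Definition even_cf (l : seq nat) : seq nat :=
  if odd (size l) then take (size l).-1 l ++ [:: (last 0%N l).-1; 1%N] else l.

(* The q-deformation [r/s]_q, with the convention [1]_q = 1. *)
Definition qrat (r : rat) : RF :=
  if r == 1 then 1 else qcf true (even_cf (cf_of_rat r)).

Fixpoint cf_val (l : seq nat) : rat :=
  match l with
  | [::] => 0
  | [:: x] => x%:R
  | x :: l' => x%:R + (cf_val l')^-1
  end.

Definition conv (a : nat -> nat) (n : nat) : rat := cf_val [seq a i | i <- iota 1 n].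

Fixpoint ps_upto (P Q : {poly rat}) (n : nat) : seq rat :=
  match n with
  | 0 => [:: P`_0 / Q`_0]
  | n'.+1 => let cs := ps_upto P Q n' in
     rcons cs ((P`_n - \sum_(k < n) Q`_k.+1 * cs`_(n' - k)) / Q`_0)
  end.
Definition ps_coef (P Q : {poly rat}) (j : nat) : rat := (ps_upto P Q j)`_j.

(* Taylor coefficient at q = 0 of a rational function f = n/d:
   cancel the power q^v of q dividing d (v = order of vanishing of d at 0)
   and expand the resulting quotient, whose denominator has nonzero
   constant term (for f regular at 0). *)
Definition taylor (f : RF) (j : nat) : rat :=
  let x := repr f in
  let v := find (fun c : rat => c != 0) (\d_x : {poly rat}) in
  ps_coef (drop_poly v \n_x) (drop_poly v \d_x) j.

(* Main.v *)
Require Import Defs.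
From HB Require Import structures.
From mathcomp Require Import all_boot all_order all_algebra fraction generic_quotient.
From mathcomp Require Import ring lra.
Import Order.TTheory GRing.Theory Num.Theory.
Local Open Scope ring_scope.
Set Implicit Arguments. Unset Strict Implicit. Unset Printing Implicit Defensive.

Lemma dvdXnP (N : nat) (p : {poly rat}) :
  reflect (forall i, (i < N)%N -> p`_i = 0) ('X^N %| p).
Proof.
rewrite /dvdp -Pdiv.IdomainMonic.take_poly_modp; apply: (iffP eqP) => [H i Hi | H].
  by have := congr1 (fun p : {poly rat} => p`_i) H; rewrite coef_take_poly Hi coef0.
apply/polyP => i; rewrite coef_take_poly coef0; case: ifP => // /H //.
Qed.

Lemma coprimeXn (k : nat) (V : {poly rat}) : V`_0 != 0 -> coprimep ('X^k) V.
Proof.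
move=> hV; apply: coprimep_expl; rewrite coprimep_sym coprimepX.
by rewrite /root horner_coef0.
Qed.

Lemma dvdXn_cancel k (p V : {poly rat}) : V`_0 != 0 -> 'X^k %| p * V -> 'X^k %| p.
Proof. by move=> hV; rewrite Gauss_dvdpl // coprimeXn. Qed.

Lemma ps_upto_size (P Q : {poly rat}) n : size (ps_upto P Q n) = n.+1.
Proof. by elim: n => //= n IH; rewrite size_rcons IH. Qed.

Lemma ps_upto_prefix (P Q : {poly rat}) n i : (i <= n)%N -> (ps_upto P Q n)`_i = ps_coef P Q i.
Proof.
elim: n => [|n IH]; first by rewrite leqn0 => /eqP ->.
rewrite leq_eqVlt => /orP [/eqP -> //|hi].
by rewrite /= nth_rcons ps_upto_size hi IH.
Qed.

Lemma ps_rec (P Q : {poly rat}) n : Q`_0 != 0 ->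
  \sum_(i < n.+1) Q`_i * ps_coef P Q (n - i) = P`_n.
Proof.
move=> hQ; case: n => [|n].
  by rewrite big_ord1 /ps_coef /= mulrC divfK.
rewrite big_ord_recl /= subn0.
have -> : ps_coef P Q n.+1 =
   (P`_n.+1 - \sum_(k < n.+1) Q`_k.+1 * ps_coef P Q (n - k)) / Q`_0.
  rewrite /ps_coef /= nth_rcons ps_upto_size ltnn eqxx.
  congr ((_ - _) / _); apply: eq_bigr => k _.
  by rewrite ps_upto_prefix // leq_subr.
rewrite mulrC divfK //.
under eq_bigr => k _ do rewrite /bump /= add1n subSS.
by rewrite subrK.
Qed.

Lemma ps_trunc (P Q : {poly rat}) N : Q`_0 != 0 ->
  'X^N %| Q * \poly_(i < N) ps_coef P Q i - P.
Proof.
move=> hQ; apply/dvdXnP => n hn.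
rewrite coefB coefM -(ps_rec P n hQ) -sumrB.
apply: big1 => i _; rewrite coef_poly.
have -> : (n - i < N)%N by apply: leq_ltn_trans (leq_subr _ _) hn.
by rewrite subrr.
Qed.

Lemma ps_agree (P Q P' Q' : {poly rat}) k : Q`_0 != 0 -> Q'`_0 != 0 ->
  'X^k %| P * Q' - P' * Q ->
  forall j, (j < k)%N -> ps_coef P Q j = ps_coef P' Q' j.
Proof.
move=> hQ hQ' hd j hj.
set T := \poly_(i < k) ps_coef P Q i.
set T' := \poly_(i < k) ps_coef P' Q' i.
have h1 := ps_trunc P k hQ; have h2 := ps_trunc P' k hQ'.
have E : (T - T') * (Q * Q') =
   Q' * (Q * T - P) - Q * (Q' * T' - P') + (P * Q' - P' * Q) by ring.
have : 'X^k %| (T - T') * (Q * Q').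
  by rewrite E dvdp_add // dvdp_sub // dvdp_mull.
move/dvdXn_cancel; rewrite coef0M mulf_neq0 // => /(_ isT) /dvdXnP /(_ j hj).
rewrite coefB !coef_poly hj => /eqP; rewrite subr_eq0 => /eqP.
done.
Qed.

Local Open Scope quotient_scope.
Notation "x %:F" := (@FracField.tofrac _ x).

Lemma frac_repr (f : RF) :
  f = (\n_(repr f))%:F / (\d_(repr f))%:F.
Proof.
have hd : (\d_(repr f))%:F != 0 :> RF.
  rewrite tofrac_eq0. exact: denom_ratioP.
suff E : f * (\d_(repr f))%:F = (\n_(repr f))%:F by rewrite -E mulfK.
move: (reprK f) (denom_ratioP (repr f)) => Ef. set x := repr f => dx.
rewrite -{1}Ef.
unlock FracField.tofrac.
change (FracField.mul (\pi_RF x) (\pi_RF (Ratio \d_x 1)) = \pi_RF (Ratio \n_x 1)).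
rewrite -FracField.pi_mul.
apply/eqmodP.
rewrite /= FracField.equivfE /FracField.mulf /= !numden_Ratio ?mulf_neq0 ?oner_neq0 //.
by rewrite !mulr1 mulrC.
Qed.

Lemma poly_neq0_of_coef0 (Q : {poly rat}) : Q`_0 != 0 -> Q != 0.
Proof. by apply: contra => /eqP ->; rewrite coef0. Qed.

Lemma frac_cross (n d P Q : {poly rat}) : d != 0 -> Q != 0 ->
  n%:F / d%:F = P%:F / Q%:F :> RF -> n * Q = P * d.
Proof.
move=> hd hQ E.
have hd' : d%:F != 0 :> RF by rewrite tofrac_eq0.
have hQ' : Q%:F != 0 :> RF by rewrite tofrac_eq0.
have H : (n * Q)%:F = (P * d)%:F :> RF.
  rewrite !tofracM.
  have E2 : n%:F = P%:F / Q%:F * d%:F :> RF.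
    by rewrite -E (divfK hd').
  by rewrite E2 mulrAC (divfK hQ').
move/eqP: H. 
by rewrite (tofrac_eq (n * Q) (P * d)) => /eqP.
Qed.

Lemma taylor_frac (f : RF) (P Q : {poly rat}) : Q`_0 != 0 ->
  f = P%:F / Q%:F -> forall j, taylor f j = ps_coef P Q j.
Proof.
move=> hQ Ef j; rewrite /taylor.
have Ef' := frac_repr f.
move: (denom_ratioP (repr f)) Ef'.
set n := \n_(repr f); set d := \d_(repr f) => hd Ef'.
have E : n * Q = P * d.
  apply: frac_cross => //; first exact: poly_neq0_of_coef0.
  by rewrite -Ef' -Ef.
set v := find _ _.
have hv : has (fun c : rat => c != 0) d.
  apply/hasP; exists (lead_coef d); last by rewrite lead_coef_eq0.
  by rewrite lead_coefE mem_nth // ltn_predL size_poly_gt0.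
have dv : d`_v != 0 by exact: (nth_find 0 hv).
have dlow : 'X^v %| d.
  apply/dvdXnP => i hi; have := before_find 0 hi.
  by move/negbFE/eqP.
have nlow : 'X^v %| n.
  apply: (@dvdXn_cancel _ _ Q hQ); rewrite E; exact: dvdp_mull.
have ed : d = drop_poly v d * 'X^v.
  by rewrite Pdiv.IdomainMonic.drop_poly_divp divpK.
have en : n = drop_poly v n * 'X^v.
  by rewrite Pdiv.IdomainMonic.drop_poly_divp divpK.
have E2 : drop_poly v n * Q = P * drop_poly v d.
  apply: (@mulIf _ ('X^v)); first by rewrite monic_neq0 // monicXn.
  by rewrite mulrAC -en E {1}ed mulrA.
apply: (ps_agree _ _ (k := j.+1)) => //.
  by rewrite coef_drop_poly add0n.
by rewrite E2 mulrC subrr dvdp0.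
Qed.

Ltac fld := field; repeat (apply/andP; split); try assumption; try done.

Definition regS (f : RF) := exists P Q : {poly rat}, Q`_0 != 0 /\ f = P%:F / Q%:F.
Definition unitS (f : RF) :=
  exists P Q : {poly rat}, P`_0 != 0 /\ Q`_0 != 0 /\ f = P%:F / Q%:F.
Definition eqm (k : nat) (f g : RF) := exists u, regS u /\ f - g = qv ^+ k * u.

Lemma tofrac_neq0 (Q : {poly rat}) : Q`_0 != 0 -> Q%:F != 0 :> RF.
Proof. by move=> h; rewrite tofrac_eq0; exact: poly_neq0_of_coef0. Qed.

Lemma field_aux (F : fieldType) (p q p' q' x u v : F) :
  q != 0 -> q' != 0 -> v != 0 ->
  p / q - p' / q' = x * (u / v) ->
  (p * q' - p' * q) * v = x * u * (q * q').
Proof.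
move=> h1 h2 h3 E.
have -> : p * q' - p' * q = (p / q - p' / q') * (q * q') by fld.
rewrite E; fld.
Qed.

Lemma eqm_taylor k f g : regS f -> regS g -> eqm k f g ->
  forall j, (j < k)%N -> taylor f j = taylor g j.
Proof.
move=> [P [Q [hQ Ef]]] [P' [Q' [hQ' Eg]]] [u [[U [V [hV Eu]]] Efg]] j hj.
rewrite (taylor_frac hQ Ef) (taylor_frac hQ' Eg).
apply: (ps_agree hQ hQ' _ hj).
apply: (@dvdXn_cancel _ _ V hV).
have H : ((P * Q' - P' * Q) * V)%:F = ('X^k * U * (Q * Q'))%:F :> RF.
  have h1 := tofrac_neq0 hQ; have h2 := tofrac_neq0 hQ'; have h3 := tofrac_neq0 hV.
  rewrite !tofracM !tofracB !tofracM (tofracXn k 'X).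
  move: Efg; rewrite Ef Eg Eu /qv => Efg.
  exact: (@field_aux RF _ _ _ _ _ _ _ h1 h2 h3 Efg).
move/eqP: H; rewrite (tofrac_eq ((P * Q' - P' * Q) * V) ('X^k * U * (Q * Q'))).
move/eqP => ->; rewrite -mulrA; exact: dvdp_mulr.
Qed.

Lemma qv_neq0 : qv != 0.
Proof. by rewrite /qv tofrac_eq0 polyX_eq0. Qed.

Lemma qvE : qv = 'X%:F. Proof. by []. Qed.

Lemma regS_poly (p : {poly rat}) : regS p%:F.
Proof. by exists p, 1; rewrite coefC eqxx oner_neq0 tofrac1 divr1. Qed.

Lemma fa_add (F : fieldType) (p q p' q' : F) : q != 0 -> q' != 0 ->
  p / q + p' / q' = (p * q' + p' * q) / (q * q').
Proof. by move=> h1 h2; fld. Qed.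

Lemma regS_add f g : regS f -> regS g -> regS (f + g).
Proof.
move=> [P [Q [hQ ->]]] [P' [Q' [hQ' ->]]].
exists (P * Q' + P' * Q), (Q * Q'); split; first by rewrite coef0M mulf_neq0.
rewrite (@fa_add RF _ _ _ _ (tofrac_neq0 hQ) (tofrac_neq0 hQ')).
by rewrite tofracD !tofracM.
Qed.

Lemma regS_mul f g : regS f -> regS g -> regS (f * g).
Proof.
move=> [P [Q [hQ ->]]] [P' [Q' [hQ' ->]]].
exists (P * P'), (Q * Q'); split; first by rewrite coef0M mulf_neq0.
by rewrite mulf_div !tofracM.
Qed.

Lemma regS_opp f : regS f -> regS (- f).
Proof.
move=> [P [Q [hQ ->]]]; exists (- P), Q; split => //.
by rewrite tofracN mulNr.
Qed.

Lemma regS_sub f g : regS f -> regS g -> regS (f - g).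
Proof. by move=> hf hg; apply: regS_add => //; apply: regS_opp. Qed.

Lemma regS_qv : regS qv. Proof. exact: regS_poly. Qed.
Lemma regS_1 : regS 1. Proof. by rewrite -tofrac1; exact: regS_poly. Qed.

Lemma regS_exp f n : regS f -> regS (f ^+ n).
Proof.
move=> hf; elim: n => [|n IH]; first by rewrite expr0; exact: regS_1.
by rewrite exprS; apply: regS_mul.
Qed.

Lemma unitS_reg f : unitS f -> regS f.
Proof. by move=> [P [Q [_ [hQ E]]]]; exists P, Q. Qed.

Lemma unitS_neq0 f : unitS f -> f != 0.
Proof.
move=> [P [Q [hP [hQ ->]]]].
by rewrite mulf_neq0 // ?invr_eq0 tofrac_neq0.
Qed.

Lemma unitS_inv f : unitS f -> unitS f^-1.
Proof. by move=> [P [Q [hP [hQ ->]]]]; exists Q, P; rewrite invf_div. Qed.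

Lemma regS_inv f : unitS f -> regS f^-1.
Proof. by move=> h; apply/unitS_reg/unitS_inv. Qed.

Lemma unitS_mul f g : unitS f -> unitS g -> unitS (f * g).
Proof.
move=> [P [Q [hP [hQ ->]]]] [P' [Q' [hP' [hQ' ->]]]].
exists (P * P'), (Q * Q'); rewrite !coef0M !mulf_neq0 //.
by rewrite mulf_div !tofracM.
Qed.

Lemma fa_1X (F : fieldType) (x p q : F) : q != 0 ->
  1 + x * (p / q) = (q + x * p) / q.
Proof. by move=> h; fld. Qed.

Lemma unitS_1X g : regS g -> unitS (1 + qv * g).
Proof.
move=> [P [Q [hQ ->]]].
exists (Q + 'X * P), Q; split; last split => //.
  by rewrite coefD coefXM /= addr0.
rewrite (@fa_1X RF _ _ _ (tofrac_neq0 hQ)).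
by rewrite tofracD tofracM.
Qed.

Lemma eqm_mul k l f g : regS f -> regS g -> eqm k f g -> 
  forall c, eqm (l + k) (qv ^+ l * f + c) (qv ^+ l * g + c).
Proof.
move=> _ _ [u [hu E]] c; exists u; split => //.
have -> : qv ^+ l * f + c - (qv ^+ l * g + c) = qv ^+ l * (f - g) by ring.
by rewrite E exprD mulrA.
Qed.

Lemma qint_S a : qint a.+1 = 1 + qv * qint a.
Proof.
rewrite /qint big_ord_recl expr0 mulr_sumr; congr (_ + _).
by apply: eq_bigr => i _; rewrite exprS.
Qed.

Lemma qint_Sr a : qint a.+1 = qint a + qv ^+ a.
Proof. by rewrite /qint big_ord_recr. Qed.

Lemma qintinv_Sr a : qintinv a.+1 = qintinv a + qv ^- a.
Proof. by rewrite /qintinv big_ord_recr. Qed.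

Lemma qintinv_eq a : qintinv a * qv ^+ a = qv * qint a.
Proof.
elim: a => [|a IH]; first by rewrite /qintinv /qint !big_ord0 mul0r mulr0.
have h : qv ^+ a != 0 by rewrite expf_neq0 // qv_neq0.
have e2 : (qv ^+ a)^-1 * (qv * qv ^+ a) = qv by rewrite mulrCA (mulVf h) mulr1.
rewrite qintinv_Sr exprS mulrDl e2 mulrCA IH qint_S; ring.
Qed.

Lemma qintinvE a : qintinv a = qv * qint a / qv ^+ a.
Proof. by rewrite -qintinv_eq mulfK // expf_neq0 // qv_neq0. Qed.

Lemma regS_qint a : regS (qint a).
Proof.
elim: a => [|a IH]; first by rewrite /qint big_ord0 -tofrac0; exact: regS_poly.
by rewrite qint_S; apply: regS_add; [exact: regS_1 | apply: regS_mul => //; exact: regS_qv].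
Qed.

Lemma unitS_qint a : (0 < a)%N -> unitS (qint a).
Proof. by case: a => // a _; rewrite qint_S; apply/unitS_1X/regS_qint. Qed.

Lemma qcf_cons b x t : t != [::] ->
  qcf b (x :: t) = if b then qint x + qv ^+ x / qcf (~~ b) t
                   else qintinv x + qv ^- x / qcf (~~ b) t.
Proof. by case: t. Qed.

Lemma fa_inv (F : fieldType) (e z Qi w : F) : e != 0 -> w != 0 ->
  1 + z * Qi * w != 0 ->
  (z * Qi / e + e^-1 / w)^-1 = e * (w / (1 + z * Qi * w)).
Proof. by move=> h1 h2 h3; fld. Qed.

Lemma inv_false y W : unitS W ->
  (qintinv y + qv ^- y / W)^-1 = qv ^+ y * (W / (1 + qv * qint y * W)).
Proof.
move=> hW.
have h1 : qv ^+ y != 0 by rewrite expf_neq0 // qv_neq0.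
have h3 : 1 + qv * qint y * W != 0.
  rewrite -mulrA; apply/unitS_neq0/unitS_1X/regS_mul; first exact: regS_qint.
  exact: unitS_reg.
rewrite qintinvE.
exact: (@fa_inv RF _ _ _ _ h1 (unitS_neq0 hW) h3).
Qed.

Lemma unitS_false_den y W : unitS W -> unitS (1 + qv * qint y * W).
Proof.
move=> hW; rewrite -mulrA; apply/unitS_1X/regS_mul; first exact: regS_qint.
exact: unitS_reg.
Qed.

Lemma fa_cancel (F : fieldType) (z e Q : F) : z != 0 -> Q != 0 ->
  (z * e) / (z * Q) = e * Q^-1.
Proof. by move=> h1 h2; fld. Qed.

Lemma inv_false1 x : (0 < x)%N -> (qintinv x)^-1 = qv ^+ x.-1 * (qint x)^-1.
Proof.
case: x => // x _ /=.
rewrite qintinvE exprS invf_div.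
have hQ : qint x.+1 != 0 by apply/unitS_neq0/unitS_qint.
exact: (@fa_cancel RF _ _ _ qv_neq0 hQ).
Qed.

Definition posl (l : seq nat) := all (fun x => 0 < x)%N l.

Lemma qcf_inv l : l != [::] -> posl l ->
  unitS (qcf true l) /\
  exists u, regS u /\ (qcf false l)^-1 = qv ^+ (head 0%N l).-1 * u.
Proof.
elim: l => // x t IH _ /andP [hx ht].
case: (eqVneq t [::]) => [-> | tn].
  split; first exact: unitS_qint.
  by exists (qint x)^-1; split; [exact/regS_inv/unitS_qint | exact: inv_false1].
have [IHt [u [hu Eu]]] := IH tn ht.
rewrite !qcf_cons //; split.
  case: x hx => // x _.
  have -> : qint x.+1 + qv ^+ x.+1 / qcf false t =
    1 + qv * (qint x + qv ^+ x * (qcf false t)^-1) by rewrite qint_S exprS; ring.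
  apply: unitS_1X; apply: regS_add; first exact: regS_qint.
  by apply: regS_mul; [exact: regS_exp regS_qv | rewrite Eu; apply/regS_mul/hu/regS_exp/regS_qv].
rewrite (inv_false x IHt).
case: x hx => // x _ /=.
exists (qv * (qcf true t / (1 + qv * qint x.+1 * qcf true t))); split.
  apply: regS_mul; first exact: regS_qv.
  by apply: regS_mul; [exact: unitS_reg | exact/regS_inv/unitS_false_den].
by rewrite exprS -mulrA mulrCA.
Qed.

Lemma fa_diff (F : fieldType) (c w w' : F) : 1 + c * w != 0 -> 1 + c * w' != 0 ->
  w / (1 + c * w) - w' / (1 + c * w') = (w - w') / ((1 + c * w) * (1 + c * w')).
Proof. by move=> h1 h2; fld. Qed.

Lemma qcf_true2 x y s : s != [::] -> posl s ->
  qcf true [:: x, y & s] =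
  qint x + qv ^+ x * (qv ^+ y * (qcf true s / (1 + qv * qint y * qcf true s))).
Proof.
move=> sn ps; have [hW _] := qcf_inv sn ps.
rewrite qcf_cons // qcf_cons //=.
by rewrite -(inv_false y hW).
Qed.

Lemma chain2 x y s s' k : s != [::] -> posl s -> s' != [::] -> posl s' ->
  eqm k (qcf true s) (qcf true s') ->
  eqm (x + (y + k)) (qcf true [:: x, y & s]) (qcf true [:: x, y & s']).
Proof.
move=> sn ps sn' ps' [u [hu E]].
rewrite (qcf_true2 x y sn ps) (qcf_true2 x y sn' ps').
have [hW _] := qcf_inv sn ps; have [hW' _] := qcf_inv sn' ps'.
set W := qcf true s in E hW *; set W' := qcf true s' in E hW' *.
have hD := unitS_false_den y hW; have hD' := unitS_false_den y hW'.
set c := qv * qint y in hD hD' *.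
exists (u / ((1 + c * W) * (1 + c * W'))); split.
  by apply: regS_mul => //; apply/regS_inv/unitS_mul.
have e := @fa_diff RF c W W' (unitS_neq0 hD) (unitS_neq0 hD').
have -> : qint x + qv ^+ x * (qv ^+ y * (W / (1 + c * W))) -
  (qint x + qv ^+ x * (qv ^+ y * (W' / (1 + c * W')))) =
  qv ^+ x * (qv ^+ y * (W / (1 + c * W) - W' / (1 + c * W'))) by ring.
by rewrite e E !exprD !mulrA.
Qed.

Lemma chain p s s' k : ~~ odd (size p) -> posl p ->
  s != [::] -> posl s -> s' != [::] -> posl s' ->
  eqm k (qcf true s) (qcf true s') ->
  eqm (sumn p + k) (qcf true (p ++ s)) (qcf true (p ++ s')).
Proof.
move=> hp pp sn ps sn' ps' E.
have [n hn] : exists n, size p = n.*2.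
  by exists (size p)./2; rewrite -[LHS](odd_double_half (size p)) (negbTE hp).
elim: n p hn pp {hp} => [|n IH] [|x [|y p]] //= [hn] /andP [hx /andP [hy hp]].
have ps2 : posl (p ++ s) by rewrite /posl all_cat; apply/andP.
have ps2' : posl (p ++ s') by rewrite /posl all_cat; apply/andP.
have := chain2 x y _ ps2 _ ps2' (IH p hn hp).
rewrite !addnA; apply; by case: (p) => //.
Qed.

Lemma eqm_tail A k Z1 Z2 : eqm k Z1 Z2 ->
  eqm (A + k) (qint A + qv ^+ A * Z1) (qint A + qv ^+ A * Z2).
Proof.
move=> [u [hu E]]; exists u; split => //.
have -> : qint A + qv ^+ A * Z1 - (qint A + qv ^+ A * Z2) = qv ^+ A * (Z1 - Z2) by ring.
by rewrite E exprD mulrA.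
Qed.

Lemma final_q p A am L : ~~ odd (size p) -> posl p -> (0 < A)%N -> (0 < am)%N ->
  L != [::] -> posl L -> (am <= head 0%N L)%N ->
  eqm (sumn p + (A + am.-1)) (qcf true (p ++ A :: L)) (qcf true (p ++ [:: A; am])) /\
  eqm (sumn p + (A + am.-1)) (qcf true (p ++ A :: L)) (qcf true (p ++ [:: A])).
Proof.
move=> hp pp hA ham Ln pL hb.
have [_ [u [hu Eu]]] := qcf_inv Ln pL.
have pAL : posl (A :: L) by rewrite /posl /= hA.
have e1 : qcf true (A :: L) = qint A + qv ^+ A * (qv ^+ (head 0%N L).-1 * u).
  by rewrite qcf_cons // -Eu.
have e2 : qcf true [:: A; am] = qint A + qv ^+ A * (qv ^+ am.-1 * (qint am)^-1).
  by rewrite qcf_cons //= -inv_false1.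
have e3 : qcf true [:: A] = qint A + qv ^+ A * 0 by rewrite mulr0 addr0.
set b := (head 0%N L).-1 in e1.
have hb' : (am.-1 <= b)%N by rewrite /b; move: hb ham; case: (head 0%N L) => //; case: (am).
have E1 : eqm am.-1 (qv ^+ b * u) (qv ^+ am.-1 * (qint am)^-1).
  exists (qv ^+ (b - am.-1) * u - (qint am)^-1); split.
    apply: regS_sub; first by apply: regS_mul => //; apply/regS_exp/regS_qv.
    exact/regS_inv/unitS_qint.
  by rewrite mulrBr mulrA -exprD subnKC.
have E2 : eqm am.-1 (qv ^+ b * u) 0.
  exists (qv ^+ (b - am.-1) * u); split.
    by apply: regS_mul => //; apply/regS_exp/regS_qv.
  by rewrite subr0 mulrA -exprD subnKC.
split; apply: chain => //; first [by rewrite /posl /= ?ham hA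
  | by rewrite e1 e2; apply: eqm_tail | by rewrite e1 e3; apply: eqm_tail].
Qed.

Lemma qint1 : qint 1 = 1.
Proof. by rewrite qint_S /qint big_ord0 mulr0 addr0. Qed.

Lemma qintinv1 : qintinv 1 = 1.
Proof. by rewrite /qintinv big_ord1 expr0 invr1. Qed.

Lemma qcf1 b : qcf b [:: 1%N] = 1.
Proof. by case: b; [exact: qint1 | exact: qintinv1]. Qed.

Lemma qcf_split_last b p y : qcf b (p ++ [:: y; 1%N]) = qcf b (p ++ [:: y.+1]).
Proof.
elim: p b => [|z p IH] b.
  rewrite !cat0s qcf_cons // qcf1 !divr1; case: b => /=; by rewrite ?qint_Sr ?qintinv_Sr.
rewrite !cat_cons qcf_cons; last by case: p {IH}.
rewrite qcf_cons; last by case: p {IH}.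
by rewrite !IH.
Qed.

Lemma even_ok L : L != [::] -> posl L -> qcf true (even_cf L) = qcf true L.
Proof.
rewrite /even_cf; case: ifP => // _.
case/lastP: L => // p y _; rewrite /posl all_rcons => /andP [hy _].
rewrite size_rcons /= -cats1 take_size_cat // last_cat /=.
by case: y hy => // y _ /=; rewrite qcf_split_last.
Qed.

Lemma cf_val_cons x t : t != [::] -> cf_val (x :: t) = x%:R + (cf_val t)^-1.
Proof. by case: t. Qed.

Lemma cf_val_ge1 L : L != [::] -> posl L -> 1 <= cf_val L.
Proof.
elim: L => // x t IH _ /andP [hx ht].
case: (eqVneq t [::]) => [-> | tn]; first by rewrite /= ler1n.
rewrite cf_val_cons //.
have h1 := IH tn ht.
have : 0 <= (cf_val t)^-1 by rewrite invr_ge0; apply: le_trans h1.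
have : 1 <= x%:R :> rat by rewrite ler1n.
move=> ? ?; lra.
Qed.

Lemma cf_val_tail t : t != [::] -> posl t ->
  0 < (cf_val t)^-1 /\ (cf_val t)^-1 <= 1 /\ ((cf_val t)^-1 = 1 -> t = [:: 1%N]).
Proof.
move=> tn pt; have h1 := cf_val_ge1 tn pt.
have h0 : 0 < cf_val t by apply: lt_le_trans h1.
split; first by rewrite invr_gt0.
split; first by rewrite invf_le1.
move=> /(congr1 GRing.inv); rewrite invrK invr1 => E.
case: t tn pt E {h1 h0} => // y [|z t] _ /andP [hy ht].
  by move=> /= /eqP; rewrite pnatr_eq1 => /eqP ->.
have tn : z :: t != [::] by [].
rewrite cf_val_cons // => E.
have : 0 < (cf_val (z :: t))^-1.
  by rewrite invr_gt0; apply: lt_le_trans (cf_val_ge1 tn ht).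
have : 1 <= y%:R :> rat by rewrite ler1n.
move=> ? ?; exfalso; lra.
Qed.

Lemma cf_val_head L : L != [::] -> posl L ->
  (head 0%N L)%:R <= cf_val L /\ cf_val L <= (head 0%N L)%:R + 1.
Proof.
case: L => // x t _ /andP [hx ht].
case: (eqVneq t [::]) => [-> | tn]; first by rewrite /=; split; [|lra].
rewrite cf_val_cons //.
have [? [? _]] := cf_val_tail tn ht.
split; lra.
Qed.

Lemma nat_eq_frac (x x' : nat) (w w' : rat) : 0 < w -> w <= 1 -> 0 < w' -> w' <= 1 ->
  x%:R + w = x'%:R + w' -> x = x'.
Proof.
move=> h1 h2 h3 h4 E.
case: (ltngtP x x') => // h.
  have : (x.+1)%:R <= x'%:R :> rat by rewrite ler_nat.
  rewrite -natr1 => ?; exfalso; lra.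
have : (x'.+1)%:R <= x%:R :> rat by rewrite ler_nat.
rewrite -natr1 => ?; exfalso; lra.
Qed.

Lemma nat_eq_frac1 (x x' : nat) (w : rat) : 0 < w -> w <= 1 ->
  x%:R = x'%:R + w -> x = x'.+1 /\ w = 1.
Proof.
move=> h1 h2 E.
have a1 : (x' < x)%N by rewrite -(ltr_nat rat) E; lra.
have a2 : (x <= x'.+1)%N by rewrite -(ler_nat rat) E -natr1; lra.
have ex : x = x'.+1 by apply/eqP; rewrite eqn_leq a2 a1.
split => //; move: E; rewrite ex -natr1 => ?; lra.
Qed.

Lemma cf_unique L L' b : L != [::] -> posl L -> L' != [::] -> posl L' ->
  cf_val L = cf_val L' -> qcf b L = qcf b L'.
Proof.
elim: L L' b => // x t IH L' b _ /andP [hx ht].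
case: L' => // x' t' _ /andP [hx' ht'].
case: (eqVneq t [::]) => [-> | tn]; case: (eqVneq t' [::]) => [-> | tn'].
- by move=> /= /eqP; rewrite eqr_nat => /eqP ->.
- rewrite (cf_val_cons x' tn') => E; change (cf_val [:: x]) with (x%:R : rat) in E.
  have [w0 [w1 w2]] := cf_val_tail tn' ht'.
  have [ex ew] := nat_eq_frac1 w0 w1 E.
  by rewrite (w2 ew) ex; symmetry; exact: (qcf_split_last b [::] x').
- rewrite (cf_val_cons x tn) => E; change (cf_val [:: x']) with (x'%:R : rat) in E.
  have [w0 [w1 w2]] := cf_val_tail tn ht.
  have [ex ew] := nat_eq_frac1 w0 w1 (esym E).
  by rewrite (w2 ew) ex; exact: (qcf_split_last b [::] x).
rewrite !cf_val_cons // => E.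
have [w0 [w1 _]] := cf_val_tail tn ht.
have [w0' [w1' _]] := cf_val_tail tn' ht'.
have ex := nat_eq_frac w0 w1 w0' w1' E.
move: E; rewrite ex => /addrI /invr_inj Et.
rewrite qcf_cons // qcf_cons // (IH t' (~~ b)) //.
Qed.

Lemma euclid_ok fuel n d : (0 < d)%N -> (d < fuel)%N ->
  [/\ euclid_cf fuel n d != [::], head 0%N (euclid_cf fuel n d) = (n %/ d)%N,
      posl (behead (euclid_cf fuel n d)) &
      cf_val (euclid_cf fuel n d) = n%:R / d%:R].
Proof.
elim: fuel n d => // f IH n d hd hf.
have hd0 : (d == 0%N) = false by case: d hd {hf}.
have hdR : d%:R != 0 :> rat by rewrite pnatr_eq0 hd0.
rewrite /= hd0.
case: (posnP (n %% d)%N) => [hm | hm].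
  have -> : euclid_cf f d (n %% d)%N = [::] by rewrite hm; case: f {IH hf}.
  split => //=.
  have hdv : (d %| n)%N by rewrite /dvdn hm.
  by rewrite -{2}(divnK hdv) natrM mulfK.
have hf' : (n %% d < f)%N by apply: leq_trans (ltn_pmod _ hd) _.
have [ne hh pb v] := IH d (n %% d)%N hm hf'.
split; [by [] | by [] | |].
  rewrite /=; case: (euclid_cf f d (n %% d)%N) ne hh pb => //= h t _ -> ->.
  by rewrite divn_gt0 // ltnW // ltn_pmod.
rewrite cf_val_cons // v invf_div.
rewrite {3}(divn_eq n d) natrD natrM.
have hm0 : (n %% d)%N%:R != 0 :> rat by rewrite pnatr_eq0 -lt0n.
by field.
Qed.

Lemma cf_of_rat_ok r : 1 <= r ->
  [/\ cf_of_rat r != [::], posl (cf_of_rat r) & cf_val (cf_of_rat r) = r].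
Proof.
move=> hr.
have r0 : 0 < r by apply: lt_le_trans hr.
have en : (`|numq r|%N)%:R = (numq r)%:~R :> rat.
  by rewrite natr_absz gtr0_norm // numq_gt0.
have ed : (`|denq r|%N)%:R = (denq r)%:~R :> rat.
  by rewrite natr_absz gtr0_norm // denq_gt0.
have hd : (0 < `|denq r|)%N by rewrite absz_gt0 denq_neq0.
have [ne hh pb v] := euclid_ok `|numq r|%N hd (ltnSn _).
rewrite /cf_of_rat; split => //.
  move: ne hh pb; case: (euclid_cf _ _ _) => //= h t _ -> pb.
  rewrite /posl /=; move: pb; rewrite /posl => -> ; rewrite andbT divn_gt0 //.
  rewrite -(ler_nat rat) en ed -(ler_pM2r (x := ((denq r)%:~R)^-1)) ?invr_gt0 ?ltr0z ?denq_gt0 //.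
  by rewrite mulfV ?intr_eq0 ?denq_neq0 // divq_num_den.
by rewrite v en ed divq_num_den.
Qed.

Lemma cf_val_eq1 L : L != [::] -> posl L -> cf_val L = 1 -> L = [:: 1%N].
Proof.
case: L => // x t _ /andP [hx ht].
case: (eqVneq t [::]) => [-> | tn].
  by move=> /= /eqP; rewrite pnatr_eq1 => /eqP ->.
rewrite cf_val_cons // => E.
have [w0 _] := cf_val_tail tn ht.
have : 1 <= x%:R :> rat by rewrite ler1n.
move=> ?; exfalso; lra.
Qed.

Lemma qrat_cf L : L != [::] -> posl L -> qrat (cf_val L) = qcf true L.
Proof.
move=> ne pL; rewrite /qrat; case: ifP => [/eqP h1 | h1].
  by rewrite (cf_val_eq1 ne pL h1) qcf1.
have hr := cf_val_ge1 ne pL.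
have [ne' pL' v] := cf_of_rat_ok hr.
rewrite even_ok //; apply: cf_unique => //.
Qed.

Lemma inv_lt (a b : rat) : 0 < a -> 0 < b -> a < b -> b^-1 < a^-1.
Proof. by move=> ha hb; rewrite ltf_pV2 ?posrE. Qed.

Definition fp (p : seq nat) (t : rat) := foldr (fun x acc => x%:R + acc^-1) t p.

Lemma cf_val_cat p L : L != [::] -> cf_val (p ++ L) = fp p (cf_val L).
Proof.
move=> ne; elim: p => // x p IH.
by rewrite cat_cons cf_val_cons ?IH //; case: p {IH}.
Qed.

Lemma fp_pos p t : 0 < t -> 0 < fp p t.
Proof.
move=> ht; elim: p => //= x p IH.
have : 0 < (fp p t)^-1 by rewrite invr_gt0.
have : 0 <= x%:R :> rat by [].
move=> ? ?; lra.
Qed.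

Definition betw (a b r : rat) := (a < r < b) || (b < r < a).

Lemma peel p u w r : 0 < u -> 0 < w -> betw (fp p u) (fp p w) r ->
  exists s, betw u w s /\ r = fp p s.
Proof.
move=> hu hw; elim: p r => [|x p IH] r; first by move=> h; exists r.
rewrite /= /betw => H.
have hA := fp_pos p hu; have hB := fp_pos p hw.
set A := fp p u in H hA *; set B := fp p w in H hB *.
have iA : 0 < A^-1 by rewrite invr_gt0.
have iB : 0 < B^-1 by rewrite invr_gt0.
have hr : 0 < r - x%:R.
  by case/orP: H => /andP [? ?]; lra.
have H' : betw A B (r - x%:R)^-1.
  rewrite /betw; case/orP: H => /andP [h1 h2]; apply/orP.
  - right; apply/andP; split.
      by rewrite -[B]invrK; apply: inv_lt => //; lra.
    by rewrite -[A]invrK; apply: inv_lt => //; rewrite ?invr_gt0; lra.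
  - left; apply/andP; split.
      by rewrite -[A]invrK; apply: inv_lt => //; lra.
    by rewrite -[B]invrK; apply: inv_lt => //; rewrite ?invr_gt0; lra.
have [s [hs Es]] := IH _ H'.
exists s; split => //.
by rewrite -Es invrK; lra.
Qed.

Theorem lemma3p1 (a : nat -> nat) (m : nat) :
  (forall i : nat, (1 <= i)%N -> (0 < a i)%N) ->
  ~~ odd m -> (2 <= m)%N ->
  forall r : rat, conv a m.-1 < r -> r < conv a m ->
  forall j : nat, (j < (\sum_(1 <= i < m.+1) a i).-1)%N ->
    taylor (qrat r) j = taylor (qrat (conv a m.-1)) j /\
    taylor (qrat r) j = taylor (qrat (conv a m)) j.
Proof.
move=> hpos hev hm2 r h1 h2 j hj.
case: m hev hm2 h1 h2 hj => [|[|m']] // hev _ h1 h2 hj.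
set p := [seq a i | i <- iota 1 m'].
set A := a m'.+1; set am := a m'.+2.
have hA : (0 < A)%N by apply: hpos.
have ham : (0 < am)%N by apply: hpos.
have pp : posl p.
  rewrite /posl all_map; apply/allP => i; rewrite mem_iota => /andP [hi _].
  exact: hpos.
have hp : ~~ odd (size p) by rewrite size_map size_iota; move: hev => /=; rewrite negbK.
have cm1 : conv a m'.+1 = cf_val (p ++ [:: A]).
  by rewrite /conv -[m'.+1]addn1 iotaD map_cat add1n.
have cm : conv a m'.+2 = cf_val (p ++ [:: A; am]).
  by rewrite /conv -[m'.+2]addn2 iotaD map_cat add1n.
have sumE : (\sum_(1 <= i < m'.+3) a i = sumn p + (A + am))%N.
  rewrite big_nat_recr // big_nat_recr //= -addnA; congr (_ + _)%N.
  by rewrite /p sumnE big_map /index_iota subn1.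
rewrite sumE in hj.
have u0 : 0 < A%:R :> rat by rewrite ltr0n.
have am0 : 0 < am%:R :> rat by rewrite ltr0n.
have iam0 : 0 < (am%:R : rat)^-1 by rewrite invr_gt0.
have w0 : 0 < A%:R + (am%:R : rat)^-1 by lra.
have hb : betw (fp p A%:R) (fp p (A%:R + (am%:R)^-1)) r.
  apply/orP; left; apply/andP; split.
    by move: h1; rewrite cm1 cf_val_cat.
  by move: h2; rewrite cm cf_val_cat.
have [s [hs Es]] := peel u0 w0 hb.
have [s1 s2] : A%:R < s /\ s < A%:R + (am%:R)^-1.
  by case/orP: hs => /andP [? ?]; split => //; lra.
set t := (s - A%:R)^-1.
have ht : am%:R < t.
  rewrite /t -[am%:R]invrK; apply: inv_lt => //; lra.
have ht1 : 1 <= t.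
  have : 1 <= am%:R :> rat by rewrite ler1n.
  move=> ?; lra.
have [Ln pL vL] := cf_of_rat_ok ht1.
set L := cf_of_rat t in Ln pL vL.
have Er : r = cf_val (p ++ A :: L).
  rewrite Es cf_val_cat // cf_val_cons // vL /t invrK; congr (fp p _); lra.
have hbL : (am <= head 0%N L)%N.
  have [_ hh] := cf_val_head Ln pL.
  rewrite -ltnS -(ltr_nat rat) -natr1; rewrite vL in hh; lra.
have pAL : posl (p ++ A :: L).
  by rewrite /posl all_cat; apply/andP; split => //=; rewrite hA.
have pA2 : posl (p ++ [:: A; am]).
  by rewrite /posl all_cat; apply/andP; split => //=; rewrite hA ham.
have pA1 : posl (p ++ [:: A]).
  by rewrite /posl all_cat; apply/andP; split => //=; rewrite hA.
have nE : forall (s0 : seq nat) x y, s0 ++ x :: y != [::] by move=> [|? ?].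
rewrite Er cm1 cm !qrat_cf //.
have [E1 E2] := final_q hp pp hA ham Ln pL hbL.
have kj : (j < sumn p + (A + am.-1))%N.
  by move: hj; rewrite -(prednK ham) !addnS /=.
have rg : forall l, l != [::] -> posl l -> regS (qcf true l).
  by move=> l ln lp; have [hu _] := qcf_inv ln lp; exact: unitS_reg.
split.
  exact: (eqm_taylor (rg _ (nE _ _ _) pAL) (rg _ (nE _ _ _) pA1) E2).
exact: (eqm_taylor (rg _ (nE _ _ _) pAL) (rg _ (nE _ _ _) pA2) E1).
Qed.
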